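(* The family $\mathfrak{F}^*=\{\tilde{\omega},\tilde{\omega^*}\}\cup\{\tilde{L}_n:n\geq 2\}$ is not $E_3$-learnable.
   Context: Partial orders are structures in the language $\{\leq\}$. $\omega$ and $\omega^*$ are the linear orders of the natural numbers and of the negative integers; $L_n$ is the finite linear order with $n$ elements. For a partial order $L$, $\tilde{L}$ is $L$ together with infinitely many new elements that are pairwise incomparable and incomparable to the elements of $L$ (presented with domain $\mathbb{N}$). All structures have domain $\mathbb{N}$ and are identified with their atomic diagrams (elements of $2^{\mathbb{N}}$). For a family $\mathfrak{K}$, $\mathrm{LD}(\mathfrak{K})\subseteq 2^{\mathbb{N}}$ is the set of structures with domain $\mathbb{N}$ isomorphic to a member of $\mathfrak{K}$ (subspace topology). For an equivalence relation $E$ on a space $X$, $\mathfrak{K}$ is $E$-learnable if there is a continuous $\Gamma:\mathrm{LD}(\mathfrak{K})\to X$ with $\mathcal{S}\cong\mathcal{S}'\iff\Gamma(\mathcal{S})E\Gamma(\mathcal{S}')$ for all $\mathcal{S},\mathcal{S}'\in\mathrm{LD}(\mathfrak{K})$. Fix a computable bijection $\langle\cdot,\cdot\rangle:\mathbb{N}^2\to\mathbb{N}$; for $p\in\mathbb{N}^{\mathbb{N}\times\mathbb{N}}$ let $p^{[m]}(n)=p(\langle m,n\rangle)$; $E_0$ on $\mathbb{N}^{\mathbb{N}}$: $p\,E_0\,q\iff\exists m\forall n\ge m\ p(n)=q(n)$; $E_3$ on $\mathbb{N}^{\mathbb{N}\times\mathbb{N}}$: $p\,E_3\,q\iff\forall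 m\ p^{[m]}E_0q^{[m]}$. *)

(* Defs.v *)
From Stdlib Require Import Arith Bool.


(* A structure in the language {<=} with domain nat, identified with its
   atomic diagram: the interpretation of <= as a boolean relation on nat.
   (Equality atoms are fixed, so this is the atomic diagram up to a
   computable recoding of 2^N.) *)
Definition Structure := nat -> nat -> bool.

Definition iso (S S' : Structure) : Prop :=
  exists f g : nat -> nat,
    (forall x, g (f x) = x) /\ (forall y, f (g y) = y) /\
    (forall i j, S i j = S' (f i) (f j)).

(* \tilde{omega}: even numbers 2k form omega, odd numbers are new
   pairwise incomparable elements (only reflexive). *)
Definition tilde_omega : Structure := fun x y =>
  if andb (Nat.even x) (Nat.even y) then Nat.leb (Nat.div2 x) (Nat.div2 y)
  else Nat.eqb x y.

(* \tilde{omega_star}: even numbers 2k form omega_star (reverse order). *)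
Definition tilde_omega_star : Structure := fun x y =>
  if andb (Nat.even x) (Nat.even y) then Nat.leb (Nat.div2 y) (Nat.div2 x)
  else Nat.eqb x y.

(* \tilde{L_n}: 0 < ... < n-1 linearly ordered, all x >= n are new
   pairwise incomparable elements. *)
Definition tilde_L (n : nat) : Structure := fun x y =>
  if andb (Nat.ltb x n) (Nat.ltb y n) then Nat.leb x y else Nat.eqb x y.

Definition in_Fstar (K : Structure) : Prop :=
  K = tilde_omega \/ K = tilde_omega_star \/
  exists n, 2 <= n /\ K = tilde_L n.

Definition LD_Fstar (S : Structure) : Prop :=
  exists K, in_Fstar K /\ iso S K.

(* The space N^{N x N}, with p^{[m]}(n) = p m n. *)
Definition Space := nat -> nat -> nat.

Definition E0 (p q : nat -> nat) : Prop :=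
  exists k, forall n, k <= n -> p n = q n.

Definition E3 (p q : Space) : Prop := forall m, E0 (p m) (q m).

(* Continuity of Gamma : LD -> N^{N x N} (product topology, 2 and N
   discrete, subspace topology on the domain): each output coordinate
   is determined on a neighbourhood by a finite part of the diagram. *)
Definition continuous_on (D : Structure -> Prop) (G : Structure -> Space) :=
  forall S, D S -> forall m n, exists k, forall S', D S' ->
    (forall i j, i < k -> j < k -> S' i j = S i j) ->
    G S' m n = G S m n.

Definition learnable_E3 (D : Structure -> Prop) : Prop :=
  exists G : Structure -> Space, continuous_on D G /\
    forall S S', D S -> D S' -> (iso S S' <-> E3 (G S) (G S')).

(* Main.v *)
Require Import Defs.
From Stdlib Require Import Arith Bool Lia Classical ClassicalEpsilon.

Fixpoint cnt (P : nat -> bool) (x : nat) : nat :=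
  match x with 0 => 0 | S x' => cnt P x' + (if P x' then 1 else 0) end.
Definition nP (P : nat -> bool) : nat -> bool := fun x => negb (P x).

Lemma cnt_mono P x y : x <= y -> cnt P x <= cnt P y.
Proof. induction 1; simpl; [lia|]. destruct (P m); lia. Qed.

Lemma cnt_lt P x y : P x = true -> x < y -> cnt P x < cnt P y.
Proof. intros Hx Hxy. pose proof (cnt_mono P (S x) y Hxy). simpl in H. rewrite Hx in H. lia. Qed.

Lemma cnt_le_iff P x y : P x = true -> P y = true -> (x <= y <-> cnt P x <= cnt P y).
Proof.
  intros Hx Hy; split; intro H; [apply cnt_mono; auto|].
  destruct (le_lt_dec x y); auto. pose proof (cnt_lt P y x Hy l). lia.
Qed.

Lemma cnt_inj P x y : P x = true -> P y = true -> cnt P x = cnt P y -> x = y.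
Proof.
  intros Hx Hy E. destruct (lt_eq_lt_dec x y) as [[l|l]|l]; auto.
  - pose proof (cnt_lt P x y Hx l); lia.
  - pose proof (cnt_lt P y x Hy l); lia.
Qed.

Lemma cnt_surj P M k : k < cnt P M -> exists x, x < M /\ P x = true /\ cnt P x = k.
Proof.
  induction M; simpl; intro H; [lia|].
  destruct (lt_dec k (cnt P M)) as [l|l].
  - destruct (IHM l) as [x [? [? ?]]]. exists x; repeat split; auto.
  - destruct (P M) eqn:E; [|lia]. exists M; repeat split; auto; lia.
Qed.

Lemma cnt_compl P x : cnt P x + cnt (nP P) x = x.
Proof. induction x; simpl; auto. unfold nP at 2. destruct (P x); simpl; lia. Qed.

Lemma cnt_ext P Q M : (forall x, x < M -> P x = Q x) -> cnt P M = cnt Q M.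
Proof. induction M; simpl; intros H; auto. rewrite IHM by (intros; apply H; lia). rewrite H by lia. auto. Qed.

Lemma cnt_stable P M y : (forall x, P x = true -> x < M) -> M <= y -> cnt P y = cnt P M.
Proof.
  intros H; induction 1; auto. simpl. destruct (P m) eqn:E; [apply H in E; lia|lia].
Qed.

Lemma cnt_block P B d : (forall x, B <= x < B + d -> P x = true) -> cnt P (B + d) = cnt P B + d.
Proof.
  induction d; intros H; [rewrite Nat.add_0_r; lia|].
  rewrite Nat.add_succ_r. simpl. rewrite IHd by (intros; apply H; lia).
  rewrite H by lia. lia.
Qed.

Definition ord (b : bool) (x y : nat) : bool := if b then x <=? y else y <=? x.
Definition Str (b : bool) (P : nat -> bool) : Structure :=
  fun x y => if P x && P y then ord b x y else x =? y.

Lemma iso_Str_gen b b' P Q (f : nat -> nat) :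
  (forall x y, f x = f y -> x = y) -> (forall y, exists x, f x = y) ->
  (forall x, Q (f x) = P x) ->
  (forall x y, P x = true -> P y = true -> ord b x y = ord b' (f x) (f y)) ->
  iso (Str b P) (Str b' Q).
Proof.
  intros Hi Hs HQ Ho.
  exists f, (fun y => proj1_sig (constructive_indefinite_description _ (Hs y))).
  split; [|split].
  - intro x. apply Hi. destruct (constructive_indefinite_description _ (Hs (f x))); auto.
  - intro y. destruct (constructive_indefinite_description _ (Hs y)); auto.
  - intros i j. unfold Str. rewrite !HQ.
    destruct (P i) eqn:Ei, (P j) eqn:Ej; simpl; try (apply Ho; auto);
    destruct (Nat.eqb_spec i j), (Nat.eqb_spec (f i) (f j)); subst; auto;
    exfalso; auto.
Qed.

Lemma iso_ext S S1 S2 : iso S S1 -> (forall x y, S1 x y = S2 x y) -> iso S S2.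
Proof. intros [f [g [H1 [H2 H3]]]] E. exists f, g; repeat split; auto. intros; rewrite H3; auto. Qed.

Lemma iso_refl S : iso S S.
Proof. exists (fun x => x), (fun x => x); auto. Qed.

Lemma even_2 k : Nat.even (2 * k) = true.
Proof. rewrite Nat.even_mul; auto. Qed.
Lemma even_2S k : Nat.even (2 * k + 1) = false.
Proof. rewrite Nat.even_add, even_2; auto. Qed.

Lemma tilde_omega_eq (b : bool) x y :
  (if b then tilde_omega else tilde_omega_star) x y = Str b Nat.even x y.
Proof.
  destruct b; unfold tilde_omega, tilde_omega_star, Str, ord; cbv beta;
  destruct (Nat.even x) eqn:Ex, (Nat.even y) eqn:Ey; simpl; try reflexivity;
  apply Nat.even_spec in Ex, Ey; destruct Ex as [a ->]; destruct Ey as [c ->];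
  rewrite !Nat.div2_double;
  destruct (Nat.leb_spec a c), (Nat.leb_spec (2*a) (2*c)), (Nat.leb_spec c a), (Nat.leb_spec (2*c) (2*a)); auto; lia.
Qed.

Lemma tilde_L_eq N x y : tilde_L N x y = Str true (fun z => z <? N) x y.
Proof. reflexivity. Qed.

Lemma iso_fin (b : bool) P M N :
  (forall x, P x = true -> x < M) -> cnt P M = N -> iso (Str b P) (tilde_L N).
Proof.
  intros HM HN.
  assert (Hlt : forall x, P x = true -> cnt P x < N).
  { intros x Hx. pose proof (HM x Hx). subst N. apply cnt_lt; auto. }
  assert (Hst : forall y, M <= y -> cnt P y = N) by (intros; subst; apply cnt_stable; auto).
  eapply iso_ext; [|intros; symmetry; apply tilde_L_eq].
  set (f := fun x => if P x then (if b then cnt P x else N - 1 - cnt P x) else N + cnt (nP P) x).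
  apply iso_Str_gen with (f := f).
  - intros x y. unfold f. destruct (P x) eqn:Ex, (P y) eqn:Ey; intro E.
    + apply (cnt_inj P); auto. pose proof (Hlt x Ex); pose proof (Hlt y Ey). destruct b; lia.
    + pose proof (Hlt x Ex). destruct b; lia.
    + pose proof (Hlt y Ey). destruct b; lia.
    + apply (cnt_inj (nP P)); unfold nP in *; try rewrite Ex; try rewrite Ey; auto. lia.
  - intro y. destruct (lt_dec y N) as [l|l].
    + destruct (cnt_surj P M (if b then y else N - 1 - y)) as [x [? [Hx Hc]]]. { destruct b; lia. }
      exists x. unfold f. rewrite Hx. destruct b; lia.
    + destruct (cnt_surj (nP P) (y - N + 1 + M) (y - N)) as [x [? [Hx Hc]]].
      { pose proof (cnt_compl P (y - N + 1 + M)) as HH. rewrite Hst in HH by lia. pose proof (cnt_compl P M). lia. }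
      exists x. unfold f. unfold nP in Hx. destruct (P x); simpl in Hx; [discriminate|]. lia.
  - intro x. unfold f. destruct (P x) eqn:Ex.
    + apply Nat.ltb_lt. pose proof (Hlt x Ex). destruct b; lia.
    + apply Nat.ltb_ge. lia.
  - intros x y Hx Hy. unfold f, ord. rewrite Hx, Hy. pose proof (Hlt x Hx). pose proof (Hlt y Hy).
    pose proof (cnt_le_iff P x y Hx Hy). pose proof (cnt_le_iff P y x Hy Hx).
    destruct b; destruct (Nat.leb_spec x y), (Nat.leb_spec y x); symmetry;
      try apply Nat.leb_le; try apply Nat.leb_gt; lia.
Qed.

Lemma iso_inf (b : bool) P :
  (forall k, exists M, k < cnt P M) -> (forall k, exists M, k < cnt (nP P) M) ->
  iso (Str b P) (if b then tilde_omega else tilde_omega_star).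
Proof.
  intros HP HnP.
  eapply iso_ext; [|intros; symmetry; apply tilde_omega_eq].
  set (f := fun x => if P x then 2 * cnt P x else 2 * cnt (nP P) x + 1).
  apply iso_Str_gen with (f := f).
  - intros x y. unfold f. destruct (P x) eqn:Ex, (P y) eqn:Ey; intro E; try lia.
    + apply (cnt_inj P); auto. lia.
    + apply (cnt_inj (nP P)); unfold nP in *; try rewrite Ex; try rewrite Ey; auto. lia.
  - intro y. destruct (Nat.Even_or_Odd y) as [[k ->]|[k ->]].
    + destruct (HP k) as [M HM]. destruct (cnt_surj P M k HM) as [x [_ [Hx Hc]]].
      exists x. unfold f; rewrite Hx; lia.
    + destruct (HnP k) as [M HM]. destruct (cnt_surj _ M k HM) as [x [_ [Hx Hc]]].
      exists x. unfold f. unfold nP in Hx. destruct (P x); simpl in Hx; [discriminate|]. lia.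
  - intro x. unfold f. destruct (P x); [apply even_2|apply even_2S].
  - intros x y Hx Hy. unfold f, ord. rewrite Hx, Hy.
    pose proof (cnt_le_iff P x y Hx Hy). pose proof (cnt_le_iff P y x Hy Hx).
    destruct b; destruct (Nat.leb_spec x y), (Nat.leb_spec y x); symmetry;
      try apply Nat.leb_le; try apply Nat.leb_gt; lia.
Qed.

Record st := mk { sP : nat -> bool; sc : nat; sB : nat }.

Definition step (chooseN : nat -> nat) (modk : (nat -> bool) -> nat -> nat) (j : nat) (s : st) : st :=
  let N := chooseN (sc s + 1) in
  let d := N - sc s in
  let P' := fun x => sP s x || (sB s <=? x) && (x <? sB s + d) in
  mk P' N (Nat.max (modk P' j) (sB s + d) + 1).

Fixpoint stage chooseN modk (j : nat) : st :=
  match j with 0 => mk (fun _ => false) 0 0 | S j' => step chooseN modk j' (stage chooseN modk j') end.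

Definition Pinf chooseN modk (x : nat) : bool := sP (stage chooseN modk (S x)) x.

Lemma stage_inv chooseN modk (hN : forall c, c <= chooseN c) j :
  let s := stage chooseN modk j in
  (forall x, sP s x = true -> x < sB s) /\ cnt (sP s) (sB s) = sc s /\
  j <= sc s /\ j + sc s <= sB s.
Proof.
  induction j; simpl.
  - repeat split; auto; discriminate.
  - set (s := stage chooseN modk j) in *. destruct IHj as [H1 [H2 [H3 H4]]].
    unfold step; simpl. pose proof (hN (sc s + 1)).
    set (N := chooseN (sc s + 1)) in *.
    set (P' := fun x => sP s x || (sB s <=? x) && (x <? sB s + (N - sc s))).
    assert (HP' : forall x, P' x = true -> x < sB s + (N - sc s)).
    { intros x Hx. unfold P' in Hx. apply orb_true_iff in Hx as [Hx|Hx].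
      - apply H1 in Hx; lia.
      - apply andb_true_iff in Hx as [_ Hx]. apply Nat.ltb_lt in Hx; lia. }
    repeat split.
    + intros x Hx. apply HP' in Hx. lia.
    + rewrite (cnt_stable P' (sB s + (N - sc s))) by (auto; lia).
      rewrite cnt_block.
      * rewrite (cnt_ext P' (sP s)). lia.
        intros x Hx. unfold P'. destruct (Nat.leb_spec (sB s) x); [lia|]. rewrite orb_false_r; auto.
      * intros x Hx. unfold P'. apply orb_true_iff; right. apply andb_true_iff; split.
        apply Nat.leb_le; lia. apply Nat.ltb_lt; lia.
    + lia.
    + lia.
Qed.

Lemma stage_B_mono chooseN modk (hN : forall c, c <= chooseN c) j j' :
  j <= j' -> sB (stage chooseN modk j) <= sB (stage chooseN modk j').
Proof. induction 1; auto. simpl. unfold step; simpl. lia. Qed.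

Lemma stage_agree chooseN modk (hN : forall c, c <= chooseN c) j j' x :
  j <= j' -> x < sB (stage chooseN modk j) -> sP (stage chooseN modk j') x = sP (stage chooseN modk j) x.
Proof.
  induction 1; intros Hx; auto. simpl. unfold step; simpl.
  rewrite IHle by auto. pose proof (stage_B_mono chooseN modk hN j m H).
  destruct (Nat.leb_spec (sB (stage chooseN modk m)) x); [lia|]. apply orb_false_r.
Qed.

Lemma Pinf_agree chooseN modk (hN : forall c, c <= chooseN c) j x :
  x < sB (stage chooseN modk j) -> Pinf chooseN modk x = sP (stage chooseN modk j) x.
Proof.
  intros Hx. unfold Pinf. destruct (le_lt_dec j (S x)).
  - apply stage_agree; auto.
  - symmetry. apply stage_agree; [auto|lia|]. destruct (stage_inv chooseN modk hN (S x)) as [_ [_ [_ HH]]]. lia.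
Qed.

Lemma modk_bound chooseN modk j :
  modk (sP (stage chooseN modk (S j))) j < sB (stage chooseN modk (S j)).
Proof. simpl. unfold step. simpl. lia. Qed.

Lemma Pinf_inf chooseN modk (hN : forall c, c <= chooseN c) :
  (forall k, exists M, k < cnt (Pinf chooseN modk) M) /\
  (forall k, exists M, k < cnt (nP (Pinf chooseN modk)) M).
Proof.
  assert (E : forall j, cnt (Pinf chooseN modk) (sB (stage chooseN modk j)) = sc (stage chooseN modk j)).
  { intro j. destruct (stage_inv chooseN modk hN j) as [_ [H2 _]]. rewrite <- H2.
    apply cnt_ext. intros; apply Pinf_agree; auto. }
  split; intro k; exists (sB (stage chooseN modk (S k))); pose proof (E (S k));
    pose proof (stage_inv chooseN modk hN (S k)) as [_ [_ [H3 H4]]].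
  - lia.
  - pose proof (cnt_compl (Pinf chooseN modk) (sB (stage chooseN modk (S k)))). lia.
Qed.

Lemma E0_sym p q : E0 p q -> E0 q p.
Proof. intros [k H]; exists k; intros; symmetry; auto. Qed.
Lemma E0_trans p q r : E0 p q -> E0 q r -> E0 p r.
Proof. intros [k H] [k' H']; exists (k + k'); intros n Hn. rewrite H, H'; auto; lia. Qed.

Lemma LD_L N : 2 <= N -> LD_Fstar (tilde_L N).
Proof. intros. exists (tilde_L N); split; [right; right; eauto|apply iso_refl]. Qed.

Lemma LD_W (b : bool) : LD_Fstar (if b then tilde_omega else tilde_omega_star).
Proof. exists (if b then tilde_omega else tilde_omega_star); split; [destruct b; [left|right;left]; auto|apply iso_refl]. Qed.

Definition mspec (G : Structure -> Space) (m : nat) (w : Space) (b : bool) (P : nat -> bool) (j k : nat) : Prop :=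
  LD_Fstar (Str b P) -> ~ E0 (G (Str b P) m) (w m) ->
  exists n, j <= n /\ G (Str b P) m n <> w m n /\
   forall S', LD_Fstar S' -> (forall x y, x < k -> y < k -> S' x y = Str b P x y) ->
     G S' m n = G (Str b P) m n.

Lemma mspec_ex G m w b P j : continuous_on LD_Fstar G -> exists k, mspec G m w b P j k.
Proof.
  intro Hc. destruct (classic (LD_Fstar (Str b P) /\ ~ E0 (G (Str b P) m) (w m))) as [[HD HE]|HN].
  - assert (exists n, j <= n /\ G (Str b P) m n <> w m n) as [n [Hn Hne]].
    { apply NNPP; intro C. apply HE. exists j. intros n Hn. apply NNPP; intro D. apply C. eauto. }
    destruct (Hc _ HD m n) as [k Hk]. exists k. intros _ _. exists n. repeat split; auto.
  - exists 0. intros H1 H2. exfalso; auto.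
Qed.

Lemma lemmaA (G : Structure -> Space) (Hc : continuous_on LD_Fstar G)
  (Hr : forall S S', LD_Fstar S -> LD_Fstar S' -> (iso S S' <-> E3 (G S) (G S')))
  (b : bool) (m : nat) :
  ~ (forall c, exists N, c <= N /\ 2 <= N /\
        ~ E0 (G (tilde_L N) m) (G (if b then tilde_omega else tilde_omega_star) m)).
Proof.
  intro H.
  set (W := if b then tilde_omega else tilde_omega_star) in *.
  set (w := G W).
  set (chooseN := fun c => proj1_sig (constructive_indefinite_description _ (H c))).
  assert (hNs : forall c, c <= chooseN c /\ 2 <= chooseN c /\ ~ E0 (G (tilde_L (chooseN c)) m) (w m)).
  { intro c. unfold chooseN. destruct (constructive_indefinite_description _ (H c)); auto. }
  assert (hN : forall c, c <= chooseN c) by (intro c; apply hNs).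
  set (modk := fun P j => proj1_sig (constructive_indefinite_description _ (mspec_ex G m w b P j Hc))).
  assert (hM : forall P j, mspec G m w b P j (modk P j)).
  { intros P j. unfold modk. destruct (constructive_indefinite_description _ _); auto. }
  set (SS := Str b (Pinf chooseN modk)).
  assert (HSW : iso SS W).
  { destruct (Pinf_inf chooseN modk hN). apply iso_inf; auto. }
  assert (HS : LD_Fstar SS).
  { exists W; split; auto. unfold W; destruct b; [left|right;left]; auto. }
  assert (HE : E0 (G SS m) (w m)).
  { apply (proj1 (Hr SS W HS (LD_W b)) HSW). }
  destruct HE as [k0 Hk0].
  set (j := k0).
  set (PT := sP (stage chooseN modk (S j))).
  set (N := sc (stage chooseN modk (S j))).
  assert (HNe : N = chooseN (sc (stage chooseN modk j) + 1)) by reflexivity.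
  destruct (hNs (sc (stage chooseN modk j) + 1)) as [_ [HN2 HNbad]]. rewrite <- HNe in HN2, HNbad.
  destruct (stage_inv chooseN modk hN (S j)) as [Hi1 [Hi2 _]].
  assert (HT : iso (Str b PT) (tilde_L N)).
  { apply iso_fin with (M := sB (stage chooseN modk (S j))); auto. }
  assert (HTD : LD_Fstar (Str b PT)).
  { exists (tilde_L N); split; auto. right; right; eauto. }
  assert (HTbad : ~ E0 (G (Str b PT) m) (w m)).
  { intro C. apply HNbad. apply E0_trans with (G (Str b PT) m); auto.
    apply E0_sym. apply (proj1 (Hr _ _ HTD (LD_L N HN2)) HT). }
  destruct (hM PT j HTD HTbad) as [n [Hn [Hne Hcont]]].
  apply Hne. rewrite <- Hcont with (S' := SS); auto.
  intros x y Hx Hy. pose proof (modk_bound chooseN modk j).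
  unfold SS, Str. rewrite !(Pinf_agree chooseN modk hN (S j)) by (unfold PT in *; lia). reflexivity.
Qed.

Lemma not_iso_omega : ~ iso tilde_omega tilde_omega_star.
Proof.
  intros [f [g [Hgf [Hfg Hs]]]].
  assert (H02 : tilde_omega_star (f 0) (f 2) = true) by (rewrite <- Hs; reflexivity).
  assert (Ea : Nat.even (f 0) = true).
  { unfold tilde_omega_star in H02. destruct (Nat.even (f 0)) eqn:E; auto.
    simpl in H02. apply Nat.eqb_eq in H02. apply (f_equal g) in H02. rewrite !Hgf in H02. discriminate. }
  set (a := f 0) in *.
  set (w := g (S (S a))).
  assert (Hw : tilde_omega w 0 = true).
  { rewrite Hs. unfold w; rewrite Hfg. unfold tilde_omega_star.
    change (f 0) with a. replace (Nat.even (S (S a))) with (Nat.even a) by reflexivity. rewrite Ea. simpl.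
    apply Nat.leb_le. lia. }
  unfold tilde_omega in Hw. destruct (Nat.even w) eqn:Ew; simpl in Hw.
  - apply Nat.leb_le in Hw. apply Nat.even_spec in Ew. destruct Ew as [c Hc].
    rewrite Hc, Nat.div2_double in Hw. assert (w = 0) by lia.
    assert (f w = S (S a)) by (unfold w; apply Hfg). rewrite H in H0. unfold a in H0. lia.
  - apply Nat.eqb_eq in Hw. rewrite Hw in Ew. discriminate.
Qed.

Theorem mainTheorem18 : ~ learnable_E3 LD_Fstar.
Proof.
  intros [G [Hc Hr]].
  assert (HnE3 : ~ E3 (G tilde_omega) (G tilde_omega_star)).
  { intro C. apply not_iso_omega. apply (proj2 (Hr _ _ (LD_W true) (LD_W false))). exact C. }
  unfold E3 in HnE3. apply not_all_ex_not in HnE3 as [m0 Hm0].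
  assert (HA : forall b : bool, exists N0, forall N, N0 <= N -> 2 <= N ->
             E0 (G (tilde_L N) m0) (G (if b then tilde_omega else tilde_omega_star) m0)).
  { intro b. pose proof (lemmaA G Hc Hr b m0) as H.
    apply not_all_ex_not in H as [c Hc0]. exists c. intros N HN H2.
    apply NNPP; intro C. apply Hc0. exists N; auto. }
  destruct (HA true) as [N0 H0], (HA false) as [N1 H1].
  apply Hm0. apply E0_trans with (G (tilde_L (N0 + N1 + 2)) m0).
  - apply E0_sym. apply (H0 _); lia.
  - apply (H1 _); lia.
Qed.
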